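(* Let $T$ be a finite semi-simplicial triangulation of a compact surface $S$, possibly with boundary, and let $\delta: E(T) \to \mathbb{R}$ be a weight (dihedral angle) on the edges. The following are equivalent: (a) for every non-empty subcomplex $\mathcal{F}$ of $T$, $$\sum_{e \in E'(\mathcal{F})} n_{\mathcal{F}}(e)\, \delta'(e) \ge 2\pi \chi(\mathcal{F}) - K(\mathcal{F}),$$ with equality if and only if $\mathcal{F} = T$; (b) $\delta(e) > 0$ for all $e \in E(T)$, and for every set of faces $\mathcal{G} \subseteq F(T)$, writing $E(\mathcal{G})$ for the set of edges incident to some face in $\mathcal{G}$, $\sum_{e \in E(\mathcal{G})} \delta(e) \ge \pi|\mathcal{G}|$, with equality if and only if $\mathcal{G} = F(T)$ or $E(\mathcal{G}) = \emptyset$.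
   Context: $V(T),E(T),F(T)$ denote vertices, edges, faces of $T$. The exterior dihedral angle is $\delta'(e) = \pi - \delta(e)$. For a vertex $v$, the cone angle is $C_v = \sum_{e \text{ incident to } v} \delta'(e)$ and the curvature is $\kappa_v = 2\pi - C_v$. For a subcomplex $\mathcal{F}$, its total curvature is $K(\mathcal{F}) = \sum_{v \in V(\mathcal{F})} \kappa_v$, and $\chi(\mathcal{F})$ is its Euler characteristic. $E'(\mathcal{F})$ is the set of edges of $T$ that are not edges of faces of $\mathcal{F}$ but have at least one endpoint in $\mathcal{F}$, and for an edge $e$, $n_{\mathcal{F}}(e)$ is the number of endpoints of $e$ belonging to $\mathcal{F}$. *)

(* Defs.v *)
From HB Require Import structures.
From mathcomp Require Import all_boot all_order all_algebra.
From mathcomp Require Import reals trigo.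

Set Implicit Arguments.
Unset Strict Implicit.
Unset Printing Implicit Defensive.

Import Order.TTheory GRing.Theory Num.Theory.
Local Open Scope ring_scope.

(* A finite 2-dimensional semi-simplicial set (Delta-complex).
   An edge e goes from [src e] (vertex 0) to [tgt e] (vertex 1).
   A face f with ordered vertices v0,v1,v2 has boundary edges
   [bd0 f] = [v1,v2], [bd1 f] = [v0,v2], [bd2 f] = [v0,v1]
   (bd_i f is the i-th face map, i.e. the edge opposite vertex i). *)
Record dcomplex := DComplex {
  vert : finType;
  edge : finType;
  face : finType;
  src : edge -> vert;
  tgt : edge -> vert;
  bd0 : face -> edge;
  bd1 : face -> edge;
  bd2 : face -> edge }.

Section Defs.
Variable T : dcomplex.

Definition bd (f : face T) (i : 'I_3) : edge T :=
  match val i with 0 => bd0 f | 1 => bd1 f | _ => bd2 f end.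

Definition simplicial_ids : Prop :=
  forall f : face T,
    [/\ src (bd2 f) = src (bd1 f),
        tgt (bd2 f) = src (bd0 f) &
        tgt (bd1 f) = tgt (bd0 f)].

Definition endv (x : edge T * bool) : vert T :=
  if x.2 then tgt x.1 else src x.1.

Definition corner_ends (f : face T) (j : 'I_3) :
    (edge T * bool) * (edge T * bool) :=
  match val j with
  | 0 => ((bd2 f, false), (bd1 f, false))
  | 1 => ((bd2 f, true), (bd0 f, false))
  | _ => ((bd1 f, true), (bd0 f, true))
  end.

Definition corner_vertex (f : face T) (j : 'I_3) : vert T :=
  endv (corner_ends f j).1.

(* adjacency in the link of vertex v: link-vertices are the edge-ends at v,
   link-edges are the corners of faces at v *)
Definition link_adj (v : vert T) : rel (edge T * bool) :=
  fun a b => [exists f : face T, exists j : 'I_3,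
    (corner_vertex f j == v) &&
    ((corner_ends f j == (a, b)) || (corner_ends f j == (b, a)))].

Definition face_slots (e : edge T) : nat :=
  #|[set p : face T * 'I_3 | bd p.1 p.2 == e]|.

(* T is a (finite, semi-simplicial) triangulation of a compact surface,
   possibly with boundary: every edge lies in one or two face slots, and
   the link of every vertex is non-empty and connected (hence a path or a
   cycle, since all its vertices have degree 1 or 2). *)
Definition surface_triangulation : Prop :=
  [/\ simplicial_ids,
      (forall e : edge T, 1 <= face_slots e <= 2)%N &
      (forall v : vert T,
         (exists x, endv x = v) /\
         (forall x y, endv x = v -> endv y = v -> connect (link_adj v) x y))].

Definition subcomplex (Vs : {set vert T}) (Es : {set edge T})
    (Fs : {set face T}) : Prop :=
  (forall e, e \in Es -> src e \in Vs /\ tgt e \in Vs) /\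
  (forall f, f \in Fs -> [/\ bd0 f \in Es, bd1 f \in Es & bd2 f \in Es]).

(* number of endpoints of e equal to v (a loop counts twice) *)
Definition incid (v : vert T) (e : edge T) : nat :=
  ((src e == v) + (tgt e == v))%N.

Definition nF (Vs : {set vert T}) (e : edge T) : nat :=
  ((src e \in Vs) + (tgt e \in Vs))%N.

Definition Eprime (Vs : {set vert T}) (Es : {set edge T}) : {set edge T} :=
  [set e | (e \notin Es) && ((src e \in Vs) || (tgt e \in Vs))].

Definition edges_of (G : {set face T}) : {set edge T} :=
  [set e | [exists f in G, [|| bd0 f == e, bd1 f == e | bd2 f == e]]].

Variable R : realType.
Variable delta : edge T -> R.

Definition ext_angle (e : edge T) : R := pi - delta e.

Definition cone_angle (v : vert T) : R :=
  \sum_(e : edge T) (incid v e)%:R * ext_angle e.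

Definition curvature (v : vert T) : R := 2 * pi - cone_angle v.

Definition total_curvature (Vs : {set vert T}) : R :=
  \sum_(v in Vs) curvature v.

End Defs.

Definition euler_char (T : dcomplex) (Vs : {set vert T}) (Es : {set edge T})
    (Fs : {set face T}) : int :=
  (#|Vs|%:Z - #|Es|%:Z + #|Fs|%:Z)%R.

(* Main.v *)
Require Import Defs.
From HB Require Import structures.
From mathcomp Require Import all_boot all_order all_algebra.
From mathcomp Require Import reals trigo.
From mathcomp Require Import lra.
Import Order.TTheory GRing.Theory Num.Theory.
Local Open Scope ring_scope.

Lemma sum_eqv (T : finType) (Vs : {set T}) (x : T) :
  (\sum_(v in Vs) (x == v : nat))%N = (x \in Vs : nat).
Proof.
case: (boolP (x \in Vs)) => Hx.
  rewrite (bigD1 x) //= eqxx big1 // => v /andP[_ Hv].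
  by rewrite eq_sym (negbTE Hv).
rewrite big1 // => v Hv; case: eqP => // exv; subst.
by rewrite Hv in Hx.
Qed.

Lemma key (R : realType) (T : dcomplex) (delta : edge T -> R)
  (Vs : {set vert T}) (Es : {set edge T}) (Fs : {set face T}) :
  (forall e, e \in Es -> src e \in Vs /\ tgt e \in Vs) ->
  2 * pi * (euler_char Vs Es Fs)%:~R - total_curvature delta Vs =
  \sum_(e in Eprime Vs Es) (nF Vs e)%:R * ext_angle delta e
  - 2 * (\sum_(e in Es) delta e - pi * #|Fs|%:R).
Proof.
move=> H.
have TC : total_curvature delta Vs = 2 * pi * #|Vs|%:R
     - \sum_e (nF Vs e)%:R * ext_angle delta e.
  rewrite /total_curvature /curvature /cone_angle big_split /= sumrN sumr_const.
  rewrite mulr_natr; congr (_ - _).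
  rewrite exchange_big /=; apply: eq_bigr => e _.
  rewrite -mulr_suml -natr_sum /incid big_split /= !sum_eqv //.
have SP : \sum_e (nF Vs e)%:R * ext_angle delta e =
   \sum_(e in Es) 2 * ext_angle delta e
   + \sum_(e in Eprime Vs Es) (nF Vs e)%:R * ext_angle delta e.
  rewrite [in RHS]big_mkcond [X in _ + X]big_mkcond -big_split /=.
  apply: eq_bigr => e _; rewrite /Eprime inE.
  case: (boolP (e \in Es)) => He /=.
    by have [Hs Ht] := H e He; rewrite /nF Hs Ht addr0.
  rewrite add0r; case: ifP => // /negbT; rewrite negb_or.
  by case/andP => /negbTE Hs /negbTE Ht; rewrite /nF Hs Ht mul0r.
have SE : \sum_(e in Es) 2 * ext_angle delta e =
   2 * (pi * #|Es|%:R - \sum_(e in Es) delta e).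
  rewrite -mulr_sumr /ext_angle big_split /= sumrN sumr_const mulr_natr //.
rewrite TC SP SE /euler_char rmorphD rmorphB /=.
rewrite -!pmulrn.
lra.
Qed.

Lemma edges_all {T : dcomplex} : surface_triangulation T -> edges_of [set: face T] = setT.
Proof.
case=> _ Hs _; apply/setP => e; rewrite !inE.
have /andP[H1 _] := Hs e.
move: H1; rewrite /face_slots card_gt0 => /set0Pn[[f i]]; rewrite inE /= => /eqP <-.
apply/existsP; exists f; rewrite inE /bd.
by case: i => [[|[|[|]]] ] //= _; rewrite eqxx ?orbT.
Qed.

Lemma vert_cover {T : dcomplex} : surface_triangulation T ->
  forall v : vert T, exists e, src e = v \/ tgt e = v.
Proof.
case=> _ _ H v; have [[[e b] Hx] _] := H v; exists e.
by move: Hx; rewrite /endv /=; case: b => ?; [right|left].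
Qed.

Lemma edges_sub (T : dcomplex) (Vs : {set vert T}) Es Fs :
  subcomplex Vs Es Fs -> edges_of Fs \subset Es.
Proof.
case=> _ H; apply/subsetP => e; rewrite inE => /existsP[f /andP[Hf He]].
have [h0 h1 h2] := H f Hf.
by case/or3P: He => /eqP <-.
Qed.

Theorem theorem4p3 (R : realType) (T : dcomplex) (delta : edge T -> R) :
  surface_triangulation T ->
  ( (* (a) *)
    (forall (Vs : {set vert T}) (Es : {set edge T}) (Fs : {set face T}),
       subcomplex Vs Es Fs -> Es != set0 ->
       let lhs := \sum_(e in Eprime Vs Es) (nF Vs e)%:R * ext_angle delta e in
       let rhs := 2 * pi * (euler_char Vs Es Fs)%:~R
                  - total_curvature delta Vs in
       rhs <= lhs /\
       (lhs = rhs <-> [/\ Vs = setT, Es = setT & Fs = setT]))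
  <->
    (* (b) *)
    ((forall e : edge T, 0 < delta e) /\
     (forall G : {set face T},
        pi * #|G|%:R <= \sum_(e in edges_of G) delta e /\
        (\sum_(e in edges_of G) delta e = pi * #|G|%:R <->
           (G = setT \/ edges_of G = set0))))).
Proof.
move=> HT; split.
- move=> Ha.
  have Hpos : forall e, 0 < delta e.
    move=> e.
    have Hsub : subcomplex [set: vert T] [set e] set0.
      by split => [x|f]; rewrite ?inE.
    have Hne : [set e] != set0 by apply/set0Pn; exists e; rewrite inE.
    have := Ha _ _ _ Hsub Hne; cbv zeta; rewrite key; last by move=> *; rewrite !inE.
    rewrite big_set1 cards0 mulr0 subr0 => -[H1 H2].
    rewrite lt0r; apply/andP; split; last lra.
    apply/eqP => h0.
    have [_ _ HF] : [/\ [set: vert T] = setT, [set e] = setT & (set0 : {set face T}) = setT].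
      by apply/H2; rewrite h0; lra.
    have : e \in edges_of [set: face T] by rewrite edges_all.
    rewrite inE => /existsP[f _].
    by have := in_setT f; rewrite -HF inE.
  split => // G.
  case: (eqVneq (edges_of G) set0) => HE.
    have HG : G = set0.
      apply/setP => f; rewrite inE; apply/negP => Hf.
      have : bd0 f \in edges_of G.
        by rewrite inE; apply/existsP; exists f; rewrite Hf eqxx.
      by rewrite HE inE.
    rewrite HE HG big_set0 cards0 mulr0; split => //; split => //; by right.
  have Hsub : subcomplex [set: vert T] (edges_of G) G.
    split => [e _|f Hf]; rewrite ?inE //.
    by split; apply/existsP; exists f; rewrite Hf eqxx ?orbT.
  have := Ha _ _ _ Hsub HE; cbv zeta; rewrite key; last by move=> *; rewrite !inE.
  case => H1 H2; split; first lra.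
  split => [Heq | [HG | HE0]].
  + left.
    have [] // : [/\ [set: vert T] = setT, edges_of G = setT & G = setT].
    by apply/H2; lra.
  + subst G.
    suff : \sum_(e in Eprime [set: vert T] (edges_of [set: face T]))
              (nF [set: vert T] e)%:R * ext_angle delta e =
           \sum_(e in Eprime [set: vert T] (edges_of [set: face T]))
              (nF [set: vert T] e)%:R * ext_angle delta e -
           2 * (\sum_(e in edges_of [set: face T]) delta e - pi * #|[set: face T]|%:R)
      by lra.
    by apply/H2; split => //; apply: edges_all.
  + by rewrite HE0 eqxx in HE.
- move=> [Hpos Hb] Vs Es Fs Hsub HEs; cbv zeta; rewrite (key _ _ _ _ _ _ Hsub.1).
  have HsE := @edges_sub _ _ _ _ Hsub.
  have Hsplit : \sum_(e in Es) delta e =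
      \sum_(e in edges_of Fs) delta e + \sum_(e in Es :\: edges_of Fs) delta e.
    by rewrite (big_setID (edges_of Fs)) /= (setIidPr HsE).
  have Hge : 0 <= \sum_(e in Es :\: edges_of Fs) delta e.
    by apply: sumr_ge0 => e _; apply: ltW.
  have [Hb1 Hb2] := Hb Fs.
  split; first lra.
  split => [Heq | [HV HE HF]].
  + have Hs0 : \sum_(e in Es :\: edges_of Fs) delta e = 0 by lra.
    have HEsE : Es \subset edges_of Fs.
      apply/subsetP => e He; apply: contraT => HnE.
      have He' : e \in Es :\: edges_of Fs by rewrite inE HnE He.
      have := psumr_eq0P (fun i _ => ltW (Hpos i)) Hs0 He'.
      by move: (Hpos e) => /[swap] ->; rewrite ltxx.
    have : Fs = setT \/ edges_of Fs = set0 by apply/Hb2; lra.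
    case => [HF | HE0]; last first.
      by move: HEsE; rewrite HE0 subset0 => /eqP HH; rewrite HH eqxx in HEs.
    have HEt : Es = setT.
      by apply/eqP; rewrite eqEsubset subsetT -(edges_all HT) -HF.
    split => //.
    apply/setP => v; rewrite inE.
    have [e He] := vert_cover HT v.
    have He' : e \in Es by rewrite HEt inE.
    have [Hs Ht] := Hsub.1 e He'.
    by case: He => <-.
  + subst.
    have Heq : \sum_(e in edges_of [set: face T]) delta e = pi * #|[set: face T]|%:R.
      by apply/Hb2; left.
    rewrite (edges_all HT) in Heq.
    lra.
Qed.
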